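(* Let $G=(V,E)$ be a classical graph with vertex set $V=[n]$ and let $f\colon V \to \mathbb{C}^d$ be an orthogonal representation of $G$ in locally general position. Let $\phi\colon M_n\to M_d$ be given by $\phi(X) = \sum_{i=1}^n |f(i)\rangle\langle e_i| X |e_i\rangle\langle f(i)|$ for all $X\in M_n$ (an orthogonal representation of $\mathcal{S}_G=\operatorname{span}\{|e_i\rangle\langle e_j| : i=j\text{ or } i \text{ adjacent to } j\}$). Then $\phi$ is in locally general position.
   Context: $(|e_k\rangle)$ is the standard basis of $\mathbb{C}^n$. A classical orthogonal representation of $G$ is a map $f\colon V\to\mathbb{C}^d$ such that $f(i)\perp f(j)$ whenever $i\neq j$ and $i,j$ are not adjacent; it is in locally general position if for each fixed vertex, the vectors $f(j)$ representing the vertices $j$ nonadjacent to it are linearly independent. Elements $a,b$ of a $C^*$-algebra are orthogonal if $ab=ba=a^*b=ab^*=0$. For a quantum graph $\mathcal{S}\subseteq M_n$ (a subspace closed under adjoints containing $I_n$), a completely positive map $\phi\colon M_n\to M_d$ is an orthogonal representation of $\mathcal{S}$ if $\phi(A)\perp\phi(B)$ for all $A,B\in M_n$ with $A\mathcal{S}B=B\mathcal{S}A=A^*\mathcal{S}B=A\mathcal{S}B^*=\{0\}$. Such $\phi$ is in locally general position if for every nonzero projection $Q\in M_n$ and every projection $P\in M_n$ with $Q\mathcal{S}P=\{0\}$ one has $\operatorname{rank}(\phi(P))\ge\operatorname{rank}(P)$. *)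

(* Defs.v *)
(* Complex scalars: an arbitrary numClosedFieldType C
   (e.g. C = complex numbers); conjugation is Num.conj (notation x^* ). *)
From HB Require Import structures.
From mathcomp Require Import all_boot all_order all_algebra.
Set Implicit Arguments. Unset Strict Implicit. Unset Printing Implicit Defensive.
Import Order.TTheory GRing.Theory Num.Theory.
Local Open Scope ring_scope.

Section Defs.
Variable C : numClosedFieldType.

Definition adjmx m k (A : 'M[C]_(m, k)) : 'M[C]_(k, m) := (map_mx Num.conj A)^T.

Definition ket n (i : 'I_n) : 'cV[C]_n := delta_mx i 0.
Definition bra n (i : 'I_n) : 'rV[C]_n := delta_mx 0 i.

Definition innerp d (u v : 'cV[C]_d) : C := (adjmx u *m v) 0 0.

Definition simple_graph n (adj : rel 'I_n) : Prop :=
  (forall i j, adj i j = adj j i) /\ (forall i, ~~ adj i i).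

Definition orth_rep n d (adj : rel 'I_n) (f : 'I_n -> 'cV[C]_d) : Prop :=
  forall i j, i != j -> ~~ adj i j -> innerp (f i) (f j) = 0.

Definition loc_gen_pos n d (adj : rel 'I_n) (f : 'I_n -> 'cV[C]_d) : Prop :=
  forall i : 'I_n, forall c : 'I_n -> C,
    \sum_(j | (j != i) && ~~ adj i j) c j *: f j = 0 ->
    forall j, j != i -> ~~ adj i j -> c j = 0.

(* A quantum graph in M_n is represented as a (row) subspace of vectorized
   matrices: A belongs to S iff (mxvec A <= S)%MS. *)
Definition in_qg n (S : 'M[C]_(n * n)) (A : 'M[C]_n) : bool := (mxvec A <= S)%MS.

Definition S_G n (adj : rel 'I_n) : 'M[C]_(n * n) :=
  (\sum_(i : 'I_n) \sum_(j : 'I_n | (i == j) || adj i j)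
      <<mxvec (ket i *m bra j)>>)%MS.

Definition is_proj n (P : 'M[C]_n) : Prop := P *m P = P /\ adjmx P = P.

Definition qloc_gen_pos n d (S : 'M[C]_(n * n)) (phi : 'M[C]_n -> 'M[C]_d) : Prop :=
  forall Q P : 'M[C]_n, is_proj Q -> Q != 0 -> is_proj P ->
    (forall A, in_qg S A -> Q *m A *m P = 0) ->
    (\rank P <= \rank (phi P))%N.

Definition phi_of n d (f : 'I_n -> 'cV[C]_d) (X : 'M[C]_n) : 'M[C]_d :=
  \sum_(i < n) f i *m bra i *m X *m ket i *m adjmx (f i).

End Defs.

(* Main.v *)
Require Import Defs.
From mathcomp Require Import all_boot all_order all_algebra.
From mathcomp Require Import zify ring.
Import GRing.Theory Num.Theory.
Local Open Scope ring_scope.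

Lemma rank_ker_le (F : fieldType) m p q (A : 'M[F]_(m,p)) (B : 'M[F]_(m,q)) :
  (forall c : 'rV_m, c *m A = 0 -> c *m B = 0) -> (\rank B <= \rank A)%N.
Proof.
move=> H.
have sub : (kermx A <= kermx B)%MS.
  apply/sub_kermxP; apply/row_matrixP => i; rewrite row_mul row0.
  by apply: H; rewrite -row_mul mulmx_ker row0.
have := mxrankS sub; rewrite !mxrank_ker.
have := rank_leq_row A; have := rank_leq_row B. lia.
Qed.

Lemma conj_mul_eq0 (C : numClosedFieldType) (x : C) :
  (x^* * x = 0) -> x = 0.
Proof. by rewrite mulrC -normCK => /eqP; rewrite expf_eq0 /= normr_eq0 => /eqP. Qed.

Lemma conj_mul_ge0 (C : numClosedFieldType) (x : C) : 0 <= x^* * x.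
Proof. by rewrite mulrC -normCK exprn_ge0. Qed.

Arguments conj_mul_ge0 {C}.
Arguments conj_mul_eq0 {C}.

Theorem proposition5p8 (C : numClosedFieldType) (n d : nat) (adj : rel 'I_n)
  (f : 'I_n -> 'cV[C]_d) :
  simple_graph adj -> orth_rep adj f -> loc_gen_pos adj f ->
  qloc_gen_pos (S_G C adj) (phi_of f).
Proof.
move=> _ _ Hlin Q P [_ HQa] Qn0 [HPP HPa] HS.
have Pdiag : forall i, P i i = \sum_k (P k i)^* * P k i.
  move=> i; rewrite -{1}HPP -{1}HPa !mxE; apply: eq_bigr => k _.
  by rewrite !mxE.
have Pge0 : forall i, 0 <= P i i.
  by move=> i; rewrite Pdiag sumr_ge0 // => k _; apply: conj_mul_ge0.
have Pcol0 : forall i, P i i = 0 -> forall k, P k i = 0.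
  move=> i H0 k; apply: conj_mul_eq0.
  by apply: (psumr_eq0P (P := predT) (F := fun k => (P k i)^* * P k i)) => // [j _|]; [apply: conj_mul_ge0 | rewrite -Pdiag].
have : [exists k, exists i, Q k i != 0].
  rewrite -[X in is_true X]negbK negb_exists; apply/negP => /forallP H.
  apply: (negP Qn0); apply/eqP/matrixP => k i; move: (H k).
  by rewrite negb_exists => /forallP /(_ i); rewrite negbK mxE => /eqP.
case/existsP => k /existsP [i0 Hki].
pose N' := fun j => (j != i0) && ~~ adj i0 j.
have HPz : forall j, ~~ N' j -> P j j = 0.
  move=> j; rewrite /N' negb_and negbK => Hj.
  have HA : in_qg (S_G C adj) (ket C i0 *m bra C j).
    rewrite /in_qg /S_G; apply: (@sumsmx_sup _ _ i0) => //.
    apply: (@sumsmx_sup _ _ j); first by move: Hj; rewrite negbK eq_sym.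
    by rewrite genmxE.
  have := HS _ HA; rewrite /ket /bra mulmxA -colE -mulmxA -rowE.
  move/matrixP => /(_ k j); rewrite !mxE big_ord1 !mxE => /eqP.
  by rewrite mulf_eq0 (negPf Hki) /= => /eqP.
pose dv := \row_i P i i; pose D := diag_mx dv.
pose Fr := \matrix_(i < n, a < d) f i a 0.
have step1 : (\rank P <= \rank D)%N.
  have -> : P = P *m (D *m diag_mx (\row_i (P i i)^-1)).
    apply/matrixP => a b; rewrite mulmxA !mul_mx_diag !mxE.
    have [Hb|Hb] := eqVneq (P b b) 0.
      by rewrite (Pcol0 _ Hb) !mul0r.
    by rewrite -mulrA mulfV ?mulr1.
  apply: leq_trans (mxrankM_maxr _ _) _; exact: mxrankM_maxl.
have He : forall c : 'rV_n, forall j, (c *m D) 0 j = c 0 j * P j j.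
  by move=> c j; rewrite mul_mx_diag !mxE.
have step2 : (\rank D <= \rank (D *m Fr))%N.
  apply: rank_ker_le => c Hc.
  have Hsum : \sum_(j | (j != i0) && ~~ adj i0 j) (c *m D) 0 j *: f j = 0.
    apply/matrixP => a z; rewrite ord1 summxE [RHS]mxE.
    move/matrixP: Hc => /(_ 0 a); rewrite mulmxA !mxE => H.
    rewrite -[RHS]H (bigID N' predT) /= [X in _ = _ + X]big1 ?addr0.
      by apply: eq_bigr => j _; rewrite !mxE.
    by move=> j Hj; rewrite He HPz // mulr0 mul0r.
  have Hl := Hlin i0 (fun j => (c *m D) 0 j) Hsum.
  apply/rowP => j; rewrite [RHS]mxE.
  case: (boolP (N' j)) => Hj.
    by case/andP: Hj => Hj1 Hj2; apply: Hl.
  by rewrite He HPz // mulr0.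
have step3 : \rank (D *m Fr) = \rank (Fr^T *m D).
  by rewrite -mxrank_tr trmx_mul tr_diag_mx.
have step4 : (\rank (Fr^T *m D) <= \rank (Fr^T *m D *m map_mx Num.conj Fr))%N.
  apply: rank_ker_le => v Hv.
  rewrite !mulmxA in Hv.
  rewrite mulmxA.
  set u := v *m Fr^T in Hv *.
  have H1 : u *m D *m (map_mx Num.conj u)^T = 0.
    have -> : (map_mx Num.conj u)^T = map_mx Num.conj Fr *m (map_mx Num.conj v)^T.
      by rewrite /u map_mxM trmx_mul -map_trmx trmxK.
    by rewrite mulmxA Hv mul0mx.
  have Hsum : \sum_i P i i * ((u 0 i)^* * u 0 i) = 0.
    move/matrixP: H1 => /(_ 0 0); rewrite !mxE => H; rewrite -[RHS]H.
    apply: eq_bigr => i _; rewrite He !mxE.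
    ring.
  have Hz := psumr_eq0P (P := predT) (F := fun i => P i i * ((u 0 i)^* * u 0 i))
     (fun i _ => mulr_ge0 (Pge0 i) (conj_mul_ge0 (u 0 i))) Hsum.
  apply/rowP => i; rewrite He [RHS]mxE.
  move: (Hz i isT) => /eqP; rewrite /= mulf_eq0 => /orP [/eqP -> | /eqP/conj_mul_eq0 ->].
    by rewrite mulr0.
  by rewrite mul0r.
have step5 : phi_of f P = Fr^T *m D *m map_mx Num.conj Fr.
  have Hi : forall i, f i *m bra C i *m P *m ket C i *m adjmx (f i)
      = P i i *: (f i *m adjmx (f i)).
    move=> i.
    have E : bra C i *m P *m ket C i = (P i i)%:M.
      apply/matrixP => x y; rewrite !ord1 /bra /ket -rowE -colE !mxE.
      by rewrite eqxx mulr1n.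
    have -> : f i *m bra C i *m P *m ket C i = f i *m (bra C i *m P *m ket C i).
      by rewrite !mulmxA.
    by rewrite E mul_mx_scalar -scalemxAl.
  rewrite /phi_of (eq_bigr _ (fun i _ => Hi i)).
  apply/matrixP => a b; rewrite mul_mx_diag summxE !mxE.
  apply: eq_bigr => i _; rewrite !mxE big_ord1 !mxE.
  ring.
rewrite step5; apply: leq_trans step1 _; apply: leq_trans step2 _.
by rewrite step3; exact: step4.
Qed.
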